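(* Let $m,n\in\mathbb{N}$ be such that ${\rm SR}(m,n)$ has at least one vertex. Then the smallest eigenvalue of ${\rm SR}(m,n)$ equals $\max\left(-n,\,-\binom{m}{2}\right)$.
   Context: $\mathbb{N}=\{0,1,2,\dots\}$. For $m,n\in\mathbb{N}$, ${\rm SR}(m,n)$ is the graph whose vertices are the vectors in $\mathbb{N}^m$ with coordinate sum $n$, two vertices being adjacent when they differ in precisely two coordinate positions. Eigenvalues are those of the adjacency matrix. *)

(* Defs.v *)
From HB Require Import structures.
From mathcomp Require Import all_boot all_order all_algebra.
Set Implicit Arguments. Unset Strict Implicit. Unset Printing Implicit Defensive.
Import Order.TTheory GRing.Theory Num.Theory.
Local Open Scope ring_scope.

(* Each coordinate
   is at most n, so we represent a vertex as a function 'I_m -> 'I_n.+1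
   (coordinate values 0..n) whose coordinate sum (in nat) is n. *)
Definition SRv (m n : nat) : predArgType :=
  {f : {ffun 'I_m -> 'I_n.+1} | (\sum_(i < m) (f i : nat))%N == n}.

Definition SR_adj (m n : nat) (u v : SRv m n) : bool :=
  #|[set i : 'I_m | val u i != val v i]| == 2%N.

Definition SR_adjmx (R : nzRingType) (m n : nat) : 'M[R]_#|SRv m n| :=
  \matrix_(i, j) (SR_adj (enum_val i) (enum_val j))%:R.

Definition smallest_eigenvalue (R : realFieldType) (k : nat) (A : 'M[R]_k) (lam : R) :=
  eigenvalue A lam /\ forall a, eigenvalue A a -> lam <= a.

(* Main.v *)
Require Import Defs.
From HB Require Import structures.
From mathcomp Require Import all_boot all_order all_algebra all_fingroup.
From mathcomp Require Import zify ring lra.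
Set Implicit Arguments. Unset Strict Implicit. Unset Printing Implicit Defensive.
Import Order.TTheory GRing.Theory Num.Theory.
Section Vert.
Variables m n : nat.

Definition cv (u : SRv m n) (k : 'I_m) : nat := sval u k.

Lemma cv_sum u : (\sum_k cv u k)%N = n.
Proof. by apply/eqP; case: u. Qed.

Lemma cv_inj u v : (forall k, cv u k = cv v k) -> u = v.
Proof. by move=> H; apply: val_inj; apply/ffunP => k; apply: val_inj; apply: H. Qed.

Lemma cv_le u k : cv u k <= n.
Proof. by rewrite -ltnS /cv ltn_ord. Qed.

Lemma le_sum (g : 'I_m -> nat) k : g k <= \sum_j g j.
Proof. by rewrite (bigD1 k) //= leq_addr. Qed.

Lemma mkV_proof (g : 'I_m -> nat) : (\sum_k g k)%N == n ->
  (\sum_k (([ffun k => inord (g k)] : {ffun 'I_m -> 'I_n.+1}) k : nat))%N == n.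
Proof.
move=> /eqP H; apply/eqP; have H0 := H; apply: etrans H0; apply: eq_bigr => k _.
by rewrite ffunE inordK // ltnS -H le_sum.
Qed.

Definition mkV (g : 'I_m -> nat) (H : (\sum_k g k)%N == n) : SRv m n :=
  exist (fun f : {ffun 'I_m -> 'I_n.+1} => (\sum_(i < m) (f i : nat))%N == n)
    [ffun k => inord (g k)] (mkV_proof H).

Lemma cv_mkV g H k : cv (@mkV g H) k = g k.
Proof.
rewrite /cv /= ffunE inordK // ltnS; move/eqP: H => <-; exact: le_sum.
Qed.

End Vert.
Section Gram.
Local Open Scope ring_scope.
Variables (R : realFieldType) (V C : finType) (adj : V -> V -> bool)
  (N : C -> V -> bool) (k : nat).
Hypothesis Hcnt : forall u v,
  (\sum_c ((N c u && N c v) : nat))%N = (adj u v + k * (u == v))%N.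

Lemma gram_bil (X Y : V -> R) :
  \sum_u \sum_v X u * Y v * (adj u v)%:R =
  \sum_c ((\sum_u (N c u)%:R * X u) * (\sum_v (N c v)%:R * Y v))
   - k%:R * \sum_u X u * Y u.
Proof.
have E : \sum_c ((\sum_u (N c u)%:R * X u) * (\sum_v (N c v)%:R * Y v)) =
   \sum_u \sum_v X u * Y v * ((adj u v)%:R + k%:R * (u == v)%:R).
  rewrite (eq_bigr (fun c => \sum_u \sum_v (N c u)%:R * X u * ((N c v)%:R * Y v)));
    last by move=> c _; rewrite mulr_suml; apply: eq_bigr => u _; rewrite mulr_sumr.
  rewrite exchange_big /=; apply: eq_bigr => u _.
  rewrite exchange_big /=; apply: eq_bigr => v _.
  have -> : (adj u v)%:R + k%:R * (u == v)%:R =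
     (\sum_c ((N c u && N c v) : nat))%:R :> R by rewrite Hcnt natrD natrM.
  rewrite natr_sum mulr_sumr; apply: eq_bigr => c _.
  by case: (N c u); case: (N c v); rewrite /= ?mul0r ?mulr0 ?mul1r ?mulr1 //.
rewrite E.
have E2 : \sum_u \sum_v X u * Y v * (k%:R * (u == v)%:R) = k%:R * \sum_u X u * Y u.
  rewrite mulr_sumr; apply: eq_bigr => u _.
  rewrite (bigD1 u) //= big1 ?addr0; first by rewrite eqxx mulr1 mulrC.
  by move=> v /negbTE; rewrite eq_sym => ->; rewrite mulr0 mulr0.
rewrite -E2 -sumrB; apply: eq_bigr => u _; rewrite -sumrB; apply: eq_bigr => v _.
by rewrite mulrDr addrK.
Qed.

Lemma gram_lb (X : V -> R) :
  - k%:R * \sum_u X u * X u <= \sum_u \sum_v X u * X v * (adj u v)%:R.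
Proof.
rewrite gram_bil mulNr -[X in X <= _](add0r) lerD2r.
by apply: sumr_ge0 => c _; rewrite -expr2; apply: sqr_ge0.
Qed.

Lemma gram_eig (X : V -> R) : (forall c, \sum_u (N c u)%:R * X u = 0) ->
  forall v, \sum_u X u * (adj u v)%:R = - k%:R * X v.
Proof.
move=> H0 v.
have := gram_bil X (fun w => (w == v)%:R).
have -> : \sum_u \sum_v0 X u * (v0 == v)%:R * (adj u v0)%:R = \sum_u X u * (adj u v)%:R.
  apply: eq_bigr => u _; rewrite (bigD1 v) //= big1 ?addr0; first by rewrite eqxx mulr1.
  by move=> w /negbTE ->; rewrite mulr0 mul0r.
move=> ->; rewrite big1 ?sub0r; last by move=> c _; rewrite H0 mul0r.
rewrite (bigD1 v) //= big1 ?addr0; first by rewrite eqxx mulr1 mulNr.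
by move=> w /negbTE ->; rewrite mulr0.
Qed.
End Gram.
Section PermInv.
Local Open Scope ring_scope.

Lemma perm_inv_sum (R : realFieldType) (m : nat) (P : 'S_m -> bool) (p q : 'I_m) :
  p != q -> (forall s, P (tperm p q * s)%g = P s) ->
  \sum_(s : 'S_m) (-1) ^+ s * (P s)%:R = 0 :> R.
Proof.
move=> pq HP.
set S := \sum_(s : 'S_m) _.
have : S = - S.
  rewrite {1}/S (reindex_inj (mulgI (tperm p q))) /= -sumrN.
  apply: eq_bigr => s _; rewrite HP odd_permM odd_tperm pq.
  by case: (odd_perm s); rewrite /= ?expr1 ?expr0 ?mulN1r ?mul1r ?opprK.
lra.
Qed.
End PermInv.
Section Star.
Variables m n : nat.
Definition SC := ('I_n.+1 * {ffun 'I_m -> 'I_n.+1})%type.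
Definition Nst (x : SC) (u : SRv m n) : bool :=
  (0 < x.1) && [exists i, [forall k, cv u k == x.2 k + x.1 * (k == i)]].

Lemma sum_pair (F : SC -> nat) : (\sum_x F x = \sum_t \sum_w F (t, w))%N.
Proof. by rewrite pair_big; apply: eq_bigr => [[]]. Qed.

Lemma sum_bool_le (a N : nat) :
  (\sum_(t < N.+1) ((0 < t) && (t <= a) : nat))%N = minn a N.
Proof.
elim: N => [|N IH]; first by rewrite big_ord_recr big_ord0.
rewrite big_ord_recr /= IH; case: leqP => H /=; lia.
Qed.

Lemma st_diag u : (\sum_x (Nst x u : nat))%N = n.
Proof.
rewrite sum_pair.
transitivity (\sum_(t < n.+1) \sum_i ((0 < t) && (t <= cv u i) : nat))%N.
  apply: eq_bigr => t _; rewrite /Nst /=.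
  case: (posnP t) => [t0|tpos] /=.
    by rewrite !big1.
  transitivity (\sum_(w : {ffun 'I_m -> 'I_n.+1}) \sum_i
      ([forall k, cv u k == w k + t * (k == i)] : nat))%N.
    apply: eq_bigr => w _; case: (boolP [exists _, _]) => [/existsP [i Hi]|/existsP Hn].
      rewrite (bigD1 i) //= Hi big1 //= => j ji; apply/eqP; rewrite eqb0; apply/negP => Hj.
      move/forallP/(_ i)/eqP: Hi; move/forallP/(_ i)/eqP: Hj.
      rewrite eqxx eq_sym (negbTE ji) /=; lia.
    symmetry; apply: big1 => i _; apply/eqP; rewrite eqb0; apply/negP => Hi.
    by apply: Hn; exists i.
  rewrite exchange_big; apply: eq_bigr => i _.
  case: (leqP t (cv u i)) => Hti.
    pose w0 : {ffun 'I_m -> 'I_n.+1} := [ffun k => inord (cv u k - t * (k == i))].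
    rewrite (bigD1 w0) //=.
    have Hw0 : forall k, (w0 k : nat) = cv u k - t * (k == i).
      move=> k; rewrite /w0 ffunE inordK // ltnS; apply: leq_trans (cv_le u k).
      exact: leq_subr.
    have -> : [forall k, cv u k == w0 k + t * (k == i)].
      apply/forallP => k; rewrite Hw0; case: (eqVneq k i) => [->|ki].
        by rewrite muln1 subnK.
      by rewrite muln0 subn0 addn0.
    rewrite big1 ?addn0 ?Hti //.
    move=> w wne; apply/eqP; rewrite eqb0; apply/negP => /forallP Hw.
    move/eqP: wne; apply; apply/ffunP => k; apply: val_inj; change ((w k : nat) = w0 k); rewrite Hw0.
    by move/eqP: (Hw k) => ->; rewrite addnK.
  apply: big1 => w _; apply/eqP; rewrite eqb0.
  apply/negP => /forallP /(_ i) /eqP; rewrite eqxx muln1 => H; lia.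
rewrite exchange_big /= -[in RHS](cv_sum u); apply: eq_bigr => i _.
by rewrite sum_bool_le; apply/minn_idPl; apply: cv_le.
Qed.
End Star.
Lemma sum_uniq (T : finType) (P : pred T) (b : bool) (x0 : T) :
  (forall x, P x -> b) -> (forall x, P x -> x = x0) -> (b -> P x0) ->
  (\sum_x (P x : nat))%N = b.
Proof.
move=> H1 H2 H3; case: b H1 H3 => H1 H3.
  rewrite (bigD1 x0) //= H3 // big1 // => x xn; apply/eqP; rewrite eqb0.
  by apply/negP => Px; move/eqP: xn; apply; apply: H2.
by apply: big1 => x _; apply/eqP; rewrite eqb0; apply/negP => /H1.
Qed.

Section Adj.
Variables m n : nat.
Implicit Types u v : SRv m n.

Definition D u v := [set i | cv u i != cv v i].

Lemma adjE u v : SR_adj u v = (#|D u v| == 2).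
Proof. by []. Qed.

Lemma sum2 u v (a b : 'I_m) : a != b ->
  (forall k, k != a -> k != b -> cv u k = cv v k) ->
  cv u a + cv u b = cv v a + cv v b.
Proof.
move=> ab H.
have E : forall w : SRv m n, n = cv w a + cv w b +
     \sum_(k | (k != a) && (k != b)) cv w k.
  move=> w; rewrite -{1}(cv_sum w) (bigD1 a) //= (bigD1 b) //=; last by rewrite eq_sym.
  by rewrite addnA.
have S : (\sum_(k | (k != a) && (k != b)) cv u k = \sum_(k | (k != a) && (k != b)) cv v k)%N.
  by apply: eq_bigr => k /andP [] /H H1 /H1.
move: (E u) (E v); rewrite S; lia.
Qed.

Lemma Dmem u v k : (k \in D u v) = (cv u k != cv v k).
Proof. by rewrite inE. Qed.

End Adj.

Section StarOff.
Variables m n : nat.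
Implicit Types u v : SRv m n.

Definition x0 u v : SC m n :=
  (inord (\sum_k (cv u k - cv v k)), [ffun k => inord (minn (cv u k) (cv v k))]).

Lemma x0_2 u v k : ((x0 u v).2 k : nat) = minn (cv u k) (cv v k).
Proof.
rewrite /= ffunE inordK // ltnS; apply: leq_trans (cv_le u k); exact: geq_minl.
Qed.

Lemma st_witness u v (i j : 'I_m) : i != j -> cv v i < cv u i ->
  cv u i + cv u j = cv v i + cv v j ->
  (forall k, k != i -> k != j -> cv u k = cv v k) ->
  Nst (x0 u v) u && Nst (x0 u v) v.
Proof.
move=> ij lt E H.
have Hs : (\sum_k (cv u k - cv v k))%N = cv u i - cv v i.
  rewrite (bigD1 i) //= big1 ?addn0 // => k ki.
  case: (eqVneq k j) => [->|kj]; first lia.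
  by rewrite H // subnn.
have Ht : ((x0 u v).1 : nat) = cv u i - cv v i.
  rewrite /= Hs inordK // ltnS; apply: leq_trans (cv_le u i); exact: leq_subr.
apply/andP; split; apply/andP; (split; first by rewrite Ht subn_gt0).
  apply/existsP; exists i; apply/forallP => k; rewrite x0_2 Ht.
  case: (eqVneq k i) => [->|ki] /=; first by apply/eqP; lia.
  case: (eqVneq k j) => [->|kj] /=; first by apply/eqP; lia.
  by rewrite H //; apply/eqP; lia.
apply/existsP; exists j; apply/forallP => k; rewrite x0_2 Ht.
case: (eqVneq k j) => [->|kj] /=; first by apply/eqP; lia.
case: (eqVneq k i) => [->|ki] /=; first by apply/eqP; lia.
by rewrite H //; apply/eqP; lia.
Qed.

Lemma st_off u v : u != v ->
  (\sum_x ((Nst x u && Nst x v) : nat))%N = SR_adj u v.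
Proof.
move=> uv; apply: (@sum_uniq _ _ _ (x0 u v)).
- move=> [t w] /andP [/andP [tp /existsP [i /forallP Hi]] /andP [_ /existsP [j /forallP Hj]]].
  simpl in Hi, Hj.
  have ij : i != j.
    apply/eqP => ij; move/eqP: uv; apply; apply: cv_inj => k.
    by move/eqP: (Hi k) => ->; move/eqP: (Hj k) => ->; rewrite ij.
  rewrite adjE; have -> : D u v = [set i; j]; last by rewrite cards2 ij.
  apply/setP => k; rewrite Dmem !inE /=.
  move/eqP: (Hi k) => ->; move/eqP: (Hj k) => ->; simpl in tp.
  case: (eqVneq k i) => [->|ki]; first by rewrite (negbTE ij) /=; apply/negP => /eqP; lia.
  case: (eqVneq k j) => [->|kj] /=; first by apply/negP => /eqP; lia.
  by rewrite eqxx.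
- move=> [t w] /andP [/andP [tp /existsP [i /forallP Hi]] /andP [_ /existsP [j /forallP Hj]]].
  simpl in Hi, Hj.
  have ij : i != j.
    apply/eqP => ij; move/eqP: uv; apply; apply: cv_inj => k.
    by move/eqP: (Hi k) => ->; move/eqP: (Hj k) => ->; rewrite ij.
  simpl in tp; rewrite /x0; congr pair.
    apply: val_inj => /=.
    have -> : (\sum_k (cv u k - cv v k))%N = t.
      rewrite (bigD1 i) //= big1 ?addn0 => [|k ki].
        by move/eqP: (Hi i) => ->; move/eqP: (Hj i) => ->; rewrite eqxx (negbTE ij); lia.
      by move/eqP: (Hi k) => ->; move/eqP: (Hj k) => ->; rewrite (negbTE ki); lia.
    by rewrite inordK.
  apply/ffunP => k; apply: val_inj; rewrite ffunE /= inordK.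
    by move/eqP: (Hi k) => ->; move/eqP: (Hj k) => ->;
      case: (eqVneq k i) => [->|ki]; rewrite ?(negbTE ij) ?eqxx /=; [|case: (k == j) => /=]; lia.
  rewrite ltnS; apply: leq_trans (cv_le u k); exact: geq_minl.
- rewrite adjE => /cards2P [a [b [ab Dab]]].
  have Hk : forall k, k != a -> k != b -> cv u k = cv v k.
    move=> k ka kb; apply/eqP; apply: contraNT (ka); rewrite -Dmem Dab !inE.
    by rewrite (negbTE kb) orbF.
  have Hsum := sum2 ab Hk.
  have Ha : cv u a != cv v a by rewrite -Dmem Dab !inE eqxx.
  case: (ltngtP (cv v a) (cv u a)) => Hc.
  + exact: st_witness ab Hc Hsum Hk.
  + apply: (@st_witness u v b a); first by rewrite eq_sym.
    * lia.
    * lia.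
    * by move=> k kb ka; apply: Hk.
  + by rewrite Hc eqxx in Ha.
Qed.
End StarOff.
Lemma st_cnt m n (u v : SRv m n) :
  (\sum_x ((Nst x u && Nst x v) : nat))%N = (SR_adj u v + n * (u == v))%N.
Proof.
case: (eqVneq u v) => [<-|uv].
  under eq_bigr => x _ do rewrite andbb.
  rewrite st_diag muln1 adjE.
  have -> : D u u = set0 by apply/setP => k; rewrite Dmem inE eqxx.
  by rewrite cards0.
by rewrite st_off // muln0 addn0.
Qed.

Lemma sum_card (T : finType) (P : pred T) : (\sum_x (P x : nat))%N = #|[set x | P x]|.
Proof.
rewrite -sum1_card [RHS]big_mkcond; apply: eq_bigr => x _; rewrite inE; by case: (P x).
Qed.

Section Line.
Variables m n : nat.
Implicit Types u v : SRv m n.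
Definition LC := ({set 'I_m} * {ffun 'I_m -> 'I_n.+1})%type.
Definition Nl (x : LC) u := (#|x.1| == 2) &&
  [forall k, if k \in x.1 then x.2 k == ord0 else sval u k == x.2 k].
Definition rP u (P : {set 'I_m}) : {ffun 'I_m -> 'I_n.+1} :=
  [ffun k => if k \in P then ord0 else sval u k].

Lemma Nl_r (P : {set 'I_m}) r u : Nl (P, r) u -> r = rP u P.
Proof.
move=> /andP [_ /forallP H]; apply/ffunP => k; rewrite ffunE; move: (H k) => /=.
by case: (k \in P) => /eqP ->.
Qed.

Lemma Nl_rP u (P : {set 'I_m}) : #|P| == 2 -> Nl (P, rP u P) u.
Proof.
move=> HP; rewrite /Nl HP /=; apply/forallP => k; rewrite ffunE.
by case: (k \in P).
Qed.

Lemma sum_pairL (F : LC -> nat) : (\sum_x F x = \sum_P \sum_r F (P, r))%N.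
Proof. by rewrite pair_big; apply: eq_bigr => [[]]. Qed.

Lemma ln_diag u : (\sum_x (Nl x u : nat))%N = 'C(m, 2).
Proof.
rewrite sum_pairL.
transitivity (\sum_(P : {set 'I_m}) (#|P| == 2 : nat))%N; last first.
  by rewrite sum_card card_draws card_ord.
apply: eq_bigr => P _.
apply: (@sum_uniq _ _ _ (rP u P)).
- by move=> r /andP [].
- by move=> r /Nl_r.
- exact: Nl_rP.
Qed.

Lemma D1 u v : #|D u v| != 1.
Proof.
apply/negP => /cards1P [a Da].
have Hk : forall k, k != a -> cv u k = cv v k.
  move=> k ka; apply/eqP; apply: contraNT ka; rewrite -Dmem Da inE; done.
have : cv u a = cv v a.
  have H1 := cv_sum u; have H2 := cv_sum v.
  rewrite (bigD1 a) //= in H1; rewrite (bigD1 a) //= in H2.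
  rewrite (eq_bigr (fun k => cv v k)) in H1; last by move=> k /Hk.
  lia.
move/eqP; apply/negP; rewrite -Dmem Da inE eqxx //.
Qed.

Lemma D0 u v : u != v -> #|D u v| != 0.
Proof.
move=> uv; apply/negP; rewrite cards_eq0 => /eqP H0; move/eqP: uv; apply.
apply: cv_inj => k; apply/eqP; apply/negPn/negP => Hk.
have : k \in D u v by rewrite Dmem.
by rewrite H0 inE.
Qed.

Lemma D_sub (P : {set 'I_m}) r u v : Nl (P, r) u -> Nl (P, r) v -> D u v \subset P.
Proof.
move=> /andP [_ /forallP Hu] /andP [_ /forallP Hv]; apply/subsetP => k.
rewrite Dmem; move: (Hu k) (Hv k) => /=; case: (k \in P) => // /eqP Eu /eqP Ev.
by rewrite /cv Eu Ev eqxx.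
Qed.

Lemma ln_off u v : u != v ->
  (\sum_x ((Nl x u && Nl x v) : nat))%N = SR_adj u v.
Proof.
move=> uv; apply: (@sum_uniq _ _ _ (D u v, rP u (D u v))).
- move=> [P r] /andP [Hu Hv]; rewrite adjE.
  have Hs := D_sub Hu Hv.
  have HP : #|P| == 2 by case/andP: Hu.
  have := subset_leq_card Hs; rewrite (eqP HP).
  have := D1 u v; have := D0 uv; case: #|D u v| => [|[|[|]]] //.
- move=> [P r] /andP [Hu Hv].
  have Hs := D_sub Hu Hv.
  have HP : #|P| == 2 by case/andP: Hu.
  have HD : #|D u v| == 2.
    have := subset_leq_card Hs; rewrite (eqP HP).
    have := D1 u v; have := D0 uv; case: #|D u v| => [|[|[|]]] //.
  have EP : D u v = P by apply/eqP; rewrite eqEcard Hs (eqP HP) (eqP HD).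
  by rewrite EP (Nl_r Hu).
- rewrite adjE => HD; rewrite Nl_rP //=; rewrite /Nl HD /=.
  apply/forallP => k; rewrite ffunE; case: (boolP (k \in D u v)) => // kD.
  move: kD; rewrite Dmem negbK => E; rewrite eq_sym; exact: E.
Qed.

Lemma ln_cnt u v :
  (\sum_x ((Nl x u && Nl x v) : nat))%N = (SR_adj u v + 'C(m, 2) * (u == v))%N.
Proof.
case: (eqVneq u v) => [<-|uv].
  under eq_bigr => x _ do rewrite andbb.
  rewrite ln_diag muln1 adjE.
  have -> : D u u = set0 by apply/setP => k; rewrite Dmem inE eqxx.
  by rewrite cards0.
by rewrite ln_off // muln0 addn0.
Qed.
End Line.
Lemma sum_uniq2 (T : finType) (P : pred T) (b : bool) :
  (forall x, P x -> b) -> (forall x y, P x -> P y -> x = y) -> (b -> exists x, P x) ->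
  (\sum_x (P x : nat))%N = b.
Proof.
move=> H1 H2 H3; case: b H1 H3 => H1 H3.
  have [x0 Px0] := H3 isT; apply: (@sum_uniq _ _ _ x0) => // x Px; exact: H2.
by apply: big1 => x _; apply/eqP; rewrite eqb0; apply/negP => /H1.
Qed.

Lemma perm_sum m (s : 'S_m) : (\sum_(k < m) (s k : nat))%N = 'C(m, 2).
Proof.
transitivity (\sum_(k < m) (k : nat))%N.
  by rewrite [RHS](reindex_inj (@perm_inj _ s)).
by rewrite -(big_mkord xpredT (fun k => k)) bin2_sum.
Qed.

Definition condX m n (a b : 'I_m -> nat) (u : SRv m n) (s : 'S_m) : bool :=
  [forall k, cv u k + a k == s k + b k].

Section Eig.
Variables (R : realFieldType) (m n : nat).
Implicit Types u v : SRv m n.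
Local Open Scope ring_scope.

Definition PX (a b : 'I_m -> nat) u : R :=
  \sum_(s : 'S_m) (-1) ^+ s * (condX a b u s : nat)%:R.

Lemma swap_sum (Np : pred (SRv m n)) a b :
  \sum_u (Np u)%:R * PX a b u =
  \sum_(s : 'S_m) (-1) ^+ s *
     ((\sum_u ((Np u && condX a b u s) : nat))%N)%:R.
Proof.
rewrite (eq_bigr (fun u => \sum_(s : 'S_m) (Np u)%:R * ((-1) ^+ s *
     (condX a b u s : nat)%:R))); last first.
  by move=> u _; rewrite /PX mulr_sumr.
rewrite exchange_big /=; apply: eq_bigr => s _.
rewrite natr_sum mulr_sumr; apply: eq_bigr => u _.
by case: (Np u); case: (condX a b u s); rewrite /= ?mul0r ?mulr0 ?mul1r ?mulr1.
Qed.

Lemma PX_u0 a b u0 : (forall k, (cv u0 k + a k = k + b k)%N) -> PX a b u0 = 1.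
Proof.
move=> H; rewrite /PX (bigD1 1%g) //= big1 ?addr0.
  have -> : condX a b u0 1%g.
    by apply/forallP => k; rewrite perm1 H.
  by rewrite odd_perm1 expr0 mul1r.
move=> s s1; have -> : condX a b u0 s = false; last by rewrite mulr0.
apply/negP => /forallP Hs; move/eqP: s1; apply; apply/permP => k; apply: val_inj.
by rewrite perm1 /=; move/eqP: (Hs k); rewrite H => /eqP; rewrite eqn_add2r => /eqP.
Qed.

End Eig.
Section StarEig.
Variables (R : realFieldType) (m n : nat) (al : 'I_m -> nat).
Hypothesis Hn : n <= 'C(m, 2).
Hypothesis Hsum : (\sum_k al k)%N = 'C(m, 2) - n.
Implicit Types u v : SRv m n.
Definition z0 : 'I_m -> nat := fun _ => 0.

Definition CondS (t : 'I_n.+1) (w : {ffun 'I_m -> 'I_n.+1}) (s : 'S_m) : bool :=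
  (0 < t) && [exists i, [forall k, (s k : nat) == w k + al k + t * (k == i)]].

Lemma inner_star t w s :
  (\sum_u ((Nst (t, w) u && condX al z0 u s) : nat))%N = CondS t w s.
Proof.
apply: sum_uniq2.
- move=> u /andP [/andP [tp /existsP [i /forallP Hi]] /forallP Hc].
  simpl in Hi, tp.
  rewrite /CondS tp; apply/existsP; exists i; apply/forallP => k.
  move/eqP: (Hi k); move/eqP: (Hc k); rewrite /z0 => H1 H2; apply/eqP; by rewrite addnAC -H2 H1 addn0.
- move=> u u' /andP [_ /forallP Hu] /andP [_ /forallP Hu']; apply: cv_inj => k.
  by move/eqP: (Hu k); move/eqP: (Hu' k); rewrite /z0; lia.
- move=> /andP [tp /existsP [i /forallP Hi]].
  have Hg : (\sum_k (w k + t * (k == i)) == n)%N.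
    have E := perm_sum s.
    rewrite (eq_bigr (fun k => (w k + t * (k == i)) + al k))%N in E; last first.
      by move=> k _; move/eqP: (Hi k) => ->; rewrite addnAC.
    by rewrite big_split /= Hsum in E; rewrite -(eqn_add2r ('C(m, 2) - n)) E subnKC.
  exists (mkV Hg); rewrite /Nst /= tp /=; apply/andP; split.
    by apply/existsP; exists i; apply/forallP => k; rewrite cv_mkV.
  by apply/forallP => k; rewrite cv_mkV /z0; move/eqP: (Hi k) => ->; rewrite addn0 addnAC.
Qed.

Lemma condS_tp t (w : {ffun 'I_m -> 'I_n.+1}) s p q : w p + al p = w q + al q ->
  CondS t w s -> CondS t w (tperm p q * s)%g.
Proof.
move=> E /andP [tp /existsP [i /forallP Hi]]; rewrite /CondS tp /=.
apply/existsP; exists (tperm p q i); apply/forallP => k; rewrite permM.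
move/eqP: (Hi (tperm p q k)) => ->.
rewrite (canF_eq (tpermK p q)).
have -> : (w (tperm p q k) + al (tperm p q k) = w k + al k)%N.
  by case: tpermP => [->|->|] //; rewrite E.
done.
Qed.

Lemma condS_ninj t (w : {ffun 'I_m -> 'I_n.+1}) s : CondS t w s ->
  exists p q, p != q /\ (w p + al p = w q + al q)%N.
Proof.
move=> /andP [tp /existsP [i /forallP Hi]].
have Hsi : (s i : nat) = w i + al i + t by move/eqP: (Hi i); rewrite eqxx muln1.
have Hlt : s i - t < m by apply: leq_ltn_trans (ltn_ord (s i)); apply: leq_subr.
set j := (s^-1)%g (Ordinal Hlt).
have Hsj : (s j : nat) = s i - t by rewrite /j permKV.
have ji : j != i by apply/eqP => ji; move: Hsj; rewrite ji; lia.
exists i, j; split; first by rewrite eq_sym.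
move/eqP: (Hi j); rewrite (negbTE ji) muln0 addn0 Hsj; lia.
Qed.

Lemma star_zero t (w : {ffun 'I_m -> 'I_n.+1}) : (\sum_u (Nst (t, w) u)%:R * PX R al z0 u = 0)%R.
Proof.
rewrite swap_sum.
under eq_bigr => s _ do rewrite inner_star.
case: (boolP [exists p, exists q, (p != q) && (w p + al p == w q + al q)%N]).
  move/existsP => [p /existsP [q /andP [pq /eqP E]]].
  apply: (@perm_inv_sum _ _ (CondS t w) p q pq) => s.
  apply/idP/idP => H; last exact: condS_tp.
  by have := condS_tp E H; rewrite mulgA tperm2 mul1g.
move=> Hne; apply: big1 => s _.
case: (boolP (CondS t w s)) => [/condS_ninj [p [q [pq E]]] | _]; last by rewrite mulr0.
by case/negP: Hne; apply/existsP; exists p; apply/existsP; exists q; rewrite pq E eqxx.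
Qed.

Hypothesis Hle : forall k : 'I_m, al k <= k.

Lemma star_u0 : exists u, PX R al z0 u = 1%R.
Proof.
have Hg : (\sum_(k < m) ((k : nat) - al k) == n)%N.
  have E : (\sum_(k < m) ((k : nat) - al k + al k))%N = 'C(m, 2).
    rewrite (eq_bigr (fun k : 'I_m => (k : nat))); last by move=> k _; rewrite subnK.
    by rewrite -(big_mkord xpredT (fun k => k)) bin2_sum.
  by rewrite big_split /= Hsum in E; rewrite -(eqn_add2r ('C(m, 2) - n)) E subnKC.
exists (mkV Hg); apply: PX_u0 => k; rewrite cv_mkV /z0 subnK ?addn0 //; exact: Hle.
Qed.
End StarEig.
Section LineEig.
Variables (R : realFieldType) (m n : nat) (be : 'I_m -> nat).
Hypothesis Hn : 'C(m, 2) <= n.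
Hypothesis Hsum : (\sum_k be k)%N = n - 'C(m, 2).
Implicit Types u v : SRv m n.

Definition CondL (P : {set 'I_m}) (r : {ffun 'I_m -> 'I_n.+1}) (s : 'S_m) : bool :=
  (#|P| == 2) && [forall k, if k \in P then r k == ord0 else (r k : nat) == s k + be k].

Lemma inner_line (P : {set 'I_m}) (r : {ffun 'I_m -> 'I_n.+1}) s :
  (\sum_u ((Nl (P, r) u && condX (@z0 m) be u s) : nat))%N = CondL P r s.
Proof.
apply: sum_uniq2.
- move=> u /andP [/andP [HP /forallP Hu] /forallP Hc]; simpl in HP, Hu.
  rewrite /CondL HP; apply/forallP => k; move: (Hu k); case: (k \in P) => // /eqP Ek.
  move/eqP: (Hc k); rewrite /z0 addn0 => <-.
  by rewrite -Ek.
- move=> u u' /andP [_ /forallP Hu] /andP [_ /forallP Hu']; apply: cv_inj => k.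
  by move/eqP: (Hu k); move/eqP: (Hu' k); rewrite /z0 !addn0 => -> ->.
- move=> /andP [HP /forallP Hr].
  have Hg : (\sum_k ((s k : nat) + be k) == n)%N.
    by rewrite big_split /= Hsum perm_sum subnKC.
  exists (mkV Hg); rewrite /Nl /= HP /=; apply/andP; split.
    apply/forallP => k; move: (Hr k); case: (k \in P) => // /eqP Ek.
    by change (cv (mkV Hg) k == r k); rewrite cv_mkV Ek.
  by apply/forallP => k; rewrite cv_mkV /z0 addn0.
Qed.

Lemma line_zero (P : {set 'I_m}) (r : {ffun 'I_m -> 'I_n.+1}) : (\sum_u (Nl (P, r) u)%:R * PX R (@z0 m) be u = 0)%R.
Proof.
rewrite swap_sum.
under eq_bigr => s _ do rewrite inner_line.
case: (boolP (#|P| == 2)) => [HP|HP].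
  have HP' := HP; move/cards2P: HP' => [p [q [pq EP]]].
  apply: (@perm_inv_sum _ _ (CondL P r) p q pq) => s.
  rewrite /CondL; congr andb; apply: eq_forallb => k.
  case: (boolP (k \in P)) => // kP; rewrite permM tpermD //.
    by apply: contraNneq kP => <-; rewrite EP !inE eqxx.
  by apply: contraNneq kP => <-; rewrite EP !inE eqxx orbT.
apply: big1 => s _; rewrite /CondL (negbTE HP) /=; exact: mulr0.
Qed.

Lemma line_u0 : exists u, PX R (@z0 m) be u = 1%R.
Proof.
have Hg : (\sum_(k < m) ((k : nat) + be k) == n)%N.
  rewrite big_split /= Hsum -(big_mkord xpredT (fun k => k)) bin2_sum.
  by rewrite subnKC.
by exists (mkV Hg); apply: PX_u0 => k; rewrite cv_mkV /z0 addn0.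
Qed.
End LineEig.
Section Main.
Variables (R : realFieldType) (m n : nat).
Local Open Scope ring_scope.

Lemma mxA (v : 'rV[R]_#|SRv m n|) j :
  (v *m SR_adjmx R m n) 0 j =
  \sum_(u : SRv m n) v 0 (enum_rank u) * (SR_adj u (enum_val j))%:R.
Proof.
rewrite mxE (reindex enum_rank) /=; last first.
  by exists enum_val => x _; [apply: enum_rankK | apply: enum_valK].
by apply: eq_bigr => u _; rewrite mxE enum_rankK.
Qed.

Lemma eig_lb (C : finType) (N : C -> SRv m n -> bool) (k : nat) :
  (forall u v, (\sum_c ((N c u && N c v) : nat))%N = (SR_adj u v + k * (u == v))%N) ->
  forall a, eigenvalue (SR_adjmx R m n) a -> - k%:R <= a.
Proof.
move=> Hc a /eigenvalueP [v Hv vn0].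
pose X : SRv m n -> R := fun u => v 0 (enum_rank u).
have HX : forall w, \sum_u X u * (SR_adj u w)%:R = a * X w.
  move=> w; have := congr1 (fun M : 'rV[R]_#|SRv m n| => M 0 (enum_rank w)) Hv.
  by rewrite /= mxA mxE enum_rankK.
have Hlb := gram_lb Hc X.
have E : \sum_u \sum_v X u * X v * (SR_adj u v)%:R = a * \sum_u X u * X u.
  rewrite exchange_big mulr_sumr; apply: eq_bigr => w _ /=.
  rewrite (eq_bigr (fun u => X w * (X u * (SR_adj u w)%:R))); last first.
    by move=> u _; rewrite mulrAC mulrC.
  by rewrite -mulr_sumr HX mulrCA mulrA.
have [j vj] : exists j, v 0 j != 0.
  apply/existsP; apply: contraR vn0 => /existsPn H; apply/eqP/rowP => j.
  by rewrite mxE; apply/eqP; move: (H j); rewrite negbK.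
have Spos : 0 < \sum_u X u * X u.
  rewrite (bigD1 (enum_val j)) //= {1 2}/X enum_valK.
  have h1 : 0 < v 0 j * v 0 j by rewrite -expr2 exprn_even_gt0 //= vj orbT.
  have h2 : 0 <= \sum_(i | i != enum_val j) X i * X i.
    by apply: sumr_ge0 => i _; rewrite -expr2 sqr_ge0.
  lra.
move: Hlb; rewrite E => H.
by rewrite -(ler_pM2r Spos).
Qed.

Lemma eig_ex (C : finType) (N : C -> SRv m n -> bool) (k : nat) (X : SRv m n -> R) :
  (forall u v, (\sum_c ((N c u && N c v) : nat))%N = (SR_adj u v + k * (u == v))%N) ->
  (forall c, \sum_u (N c u)%:R * X u = 0) -> (exists u, X u != 0) ->
  eigenvalue (SR_adjmx R m n) (- k%:R).
Proof.
move=> Hc H0 [u0 Xu0]; apply/eigenvalueP.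
exists (\row_j X (enum_val j)).
  apply/rowP => j; rewrite mxA.
  rewrite (eq_bigr (fun u => X u * (SR_adj u (enum_val j))%:R)); last first.
    by move=> u _; rewrite mxE enum_rankK.
  by rewrite (gram_eig Hc H0) !mxE.
apply/negP => /eqP H; move: Xu0.
have := congr1 (fun M : 'rV[R]_#|SRv m n| => M 0 (enum_rank u0)) H.
by rewrite !mxE enum_rankK => ->; rewrite eqxx.
Qed.
End Main.

Lemma sum_alpha D K :
  (\sum_(k < K) minn k (D - 'C(k, 2)) = minn D 'C(K, 2))%N.
Proof.
elim: K => [|K IH]; first by rewrite big_ord0.
rewrite big_ord_recr /= IH binS bin1; lia.
Qed.
Local Open Scope ring_scope.

Theorem proposition2 (R : rcfType) (m n : nat) :
  (0 < #|SRv m n|)%N ->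
  smallest_eigenvalue (SR_adjmx R m n)
    (Num.max (- (n%:R)) (- ('C(m, 2)%:R))).
Proof.
move=> Hv; split.
- case: (leqP n 'C(m, 2)) => Hn.
  + have -> : Num.max (- (n%:R)) (- ('C(m, 2)%:R)) = - (n%:R) :> R.
      by apply/max_idPl; rewrite lerN2 ler_nat.
    pose al := fun k : 'I_m => minn k ('C(m, 2) - n - 'C(k, 2)).
    have Hsum : (\sum_k al k)%N = ('C(m, 2) - n)%N.
      rewrite /al sum_alpha; lia.
    have Hle : forall k : 'I_m, (al k <= k)%N by move=> k; exact: geq_minl.
    have [u0 Hu0] := star_u0 R Hn Hsum Hle.
    apply: (@eig_ex R m n _ (@Nst m n) n (PX R al (@z0 m))).
    * exact: st_cnt.
    * by move=> [t w]; exact: star_zero.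
    * by exists u0; rewrite Hu0 oner_neq0.
  + have -> : Num.max (- (n%:R)) (- ('C(m, 2)%:R)) = - ('C(m, 2)%:R) :> R.
      by apply/max_idPr; rewrite lerN2 ler_nat ltnW.
    have m0 : (0 < m)%N.
      move/card_gt0P: Hv => [u _]; rewrite lt0n; apply/negP => /eqP m0.
      have : (\sum_k cv u k = 0)%N.
        by apply: big1 => k _; exfalso; have := ltn_ord k; lia.
      rewrite cv_sum => n0; move: Hn; rewrite n0.
      by [].
    pose be := fun k : 'I_m => ((n - 'C(m, 2)) * ((k : nat) == 0%N))%N.
    have Hsum : (\sum_k be k)%N = (n - 'C(m, 2))%N.
      rewrite (bigD1 (Ordinal m0)) //= big1 ?addn0; first by rewrite /be /= muln1.
      move=> k k0.
      rewrite /be; have -> : ((k : nat) == 0%N) = false; last by rewrite muln0.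
      by apply: contraNF k0 => /eqP k0; apply/eqP; apply: val_inj.
    have [u0 Hu0] := line_u0 R (ltnW Hn) Hsum.
    apply: (@eig_ex R m n _ (@Nl m n) 'C(m, 2) (PX R (@z0 m) be)).
    * move=> u v; apply: (@ln_cnt m n u v).
    * by move=> [P r]; exact: (line_zero R (ltnW Hn) Hsum).
    * by exists u0; rewrite Hu0 oner_neq0.
- move=> a Ha; rewrite ge_max; apply/andP; split.
    exact: (eig_lb (@st_cnt m n)).
  exact: (eig_lb (@ln_cnt m n)).
Qed.
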